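(* Let $\mathcal{C}$ be a hypergraph and $F$ an edge of $\mathcal{C}$. Then there is a long exact sequence of reduced homology groups (integer coefficients) $$\cdots\to \tilde H_{i-|F|+1}(\operatorname{Ind}(\mathcal{C}:F))\to \tilde H_i(\operatorname{Ind}(\mathcal{C}))\to \tilde H_i(\operatorname{Ind}(\mathcal{C}-F))\to \tilde H_{i-|F|}(\operatorname{Ind}(\mathcal{C}:F))\to\cdots$$
   Context: A hypergraph $\mathcal{C}$ on a finite vertex set $V$ is a family of pairwise incomparable subsets of $V$ (its edges), each of cardinality at least $2$. The independence complex $\operatorname{Ind}(\mathcal{C})$ is the simplicial complex on $V$ whose faces are the subsets of $V$ containing no edge of $\mathcal{C}$. For an edge $F$: $\mathcal{C}-F$ is the hypergraph on $V$ with edge set $\mathcal{C}\setminus\{F\}$; $N_{\mathcal{C}}(F)=\bigcup\{E\setminus F : E\in\mathcal{C},\ |E\setminus F|=1\}$; and $\mathcal{C}:F$ is the hypergraph on $V\setminus(F\cup N_{\mathcal{C}}(F))$ whose edges are the members of cardinality at least $2$ among the inclusion-minimal members of the family $\{E\setminus F : E\in \mathcal{C}-F\}$ (equivalently, $\operatorname{Ind}(\mathcal{C}:F)$ is the link of $F$ in $\operatorname{Ind}(\mathcal{C}-F)$). *)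

(* Defs.v *)
From HB Require Import structures.
From mathcomp Require Import all_boot all_order all_algebra.
Set Implicit Arguments. Unset Strict Implicit. Unset Printing Implicit Defensive.
Import Order.TTheory GRing.Theory Num.Theory.
Local Open Scope ring_scope.

Section Defs.
Variable V : finType.

Definition is_hypergraph (C : {set {set V}}) : Prop :=
  (forall E, E \in C -> (2 <= #|E|)%N) /\
  (forall E1 E2, E1 \in C -> E2 \in C -> E1 \subset E2 -> E1 = E2).

Definition Ind (W : {set V}) (C : {set {set V}}) : {set {set V}} :=
  [set S : {set V} | (S \subset W) && [forall E in C, ~~ (E \subset S)]].

Definition hdel (C : {set {set V}}) (F : {set V}) : {set {set V}} := C :\ F.

Definition hnbhd (C : {set {set V}}) (F : {set V}) : {set V} :=
  \bigcup_(E in C | #|E :\: F| == 1%N) (E :\: F).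

Definition hcolon_vertices (C : {set {set V}}) (F : {set V}) : {set V} :=
  ~: (F :|: hnbhd C F).

Definition hcolon (C : {set {set V}}) (F : {set V}) : {set {set V}} :=
  let Fam := [set E :\: F | E in hdel C F] in
  [set D in Fam | (2 <= #|D|)%N &&
                  [forall D' in Fam, (D' \subset D) ==> (D' == D)]].

Definition chainT := {ffun {set V} -> int}.

(* c is a reduced i-chain of the complex K (faces of cardinality i+1;
   degree -1 is spanned by the empty face). *)
Definition is_chain (K : {set {set V}}) (i : int) (c : chainT) : Prop :=
  forall s, c s != 0 -> s \in K /\ (#|s|%:Z = i + 1).

Definition bdry (c : chainT) : chainT :=
  [ffun s => \sum_(v in ~: s)
      (-1) ^+ #|[set u in s | (enum_rank u < enum_rank v)%N]| * c (v |: s)].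

Definition is_cycle (K : {set {set V}}) (i : int) (z : chainT) : Prop :=
  is_chain K i z /\ bdry z = 0.

Definition is_boundary (K : {set {set V}}) (i : int) (b : chainT) : Prop :=
  exists d, is_chain K (i + 1) d /\ b = bdry d.

(* f : chainT -> chainT represents a homomorphism
   H~_i(K) -> H~_j(L) (additive, cycles to cycles, boundaries to boundaries).
   Every homomorphism between these homology groups arises this way. *)
Definition hmap (K : {set {set V}}) (i : int) (L : {set {set V}}) (j : int)
  (f : chainT -> chainT) : Prop :=
  [/\ forall x y, f (x - y) = f x - f y,
      forall z, is_cycle K i z -> is_cycle L j (f z) &
      forall b, is_boundary K i b -> is_boundary L j (f b)].

(* exactness of H~_i(K) --f--> H~_j(L) --g--> H~_k(M) at H~_j(L):
   ker g = im f on homology classes. *)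
Definition exact_at (K : {set {set V}}) (i : int) (f : chainT -> chainT)
  (L : {set {set V}}) (j : int) (g : chainT -> chainT)
  (M : {set {set V}}) (k : int) : Prop :=
  forall z, is_cycle L j z ->
    (is_boundary M k (g z) <->
     exists x, is_cycle K i x /\ is_boundary L j (f x - z)).

End Defs.

(* Main.v *)
Require Import Defs.
From HB Require Import structures.
From mathcomp Require Import all_boot all_order all_algebra.
From mathcomp Require Import zify ring.
Set Implicit Arguments. Unset Strict Implicit. Unset Printing Implicit Defensive.
Import Order.TTheory GRing.Theory Num.Theory.
Local Open Scope ring_scope.

Section Gen.
Variable V : finType.
Implicit Types (s t : {set V}) (c d z : chainT V) (K L : {set {set V}}).

Definition rk (u v : V) : bool := (enum_rank u < enum_rank v)%N.
Definition sg s v : int := (-1) ^+ #|[set u in s | rk u v]|.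

Lemma bdryE c s : bdry c s = \sum_(v in ~: s) sg s v * c (v |: s).
Proof. by rewrite ffunE. Qed.

Lemma ffBE c d s : (c - d) s = c s - d s.
Proof. by rewrite !ffunE. Qed.
Lemma ff0E s : (0 : chainT V) s = 0.
Proof. by rewrite !ffunE. Qed.

Lemma bdryB c d : bdry (c - d) = bdry c - bdry d.
Proof.
apply/ffunP => s; rewrite ffBE !bdryE -sumrB; apply: eq_bigr => v _.
by rewrite ffBE mulrBr.
Qed.

Lemma bdry0 : bdry (0 : chainT V) = 0.
Proof. by apply/ffunP => s; rewrite bdryE ff0E big1 // => v _; rewrite ff0E mulr0. Qed.

Lemma sign_sq (n : nat) : (-1) ^+ n * (-1) ^+ n = 1 :> int.
Proof. by rewrite -exprMn mulrNN mulr1 expr1n. Qed.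

Lemma sgU1 s v w : v \notin s -> sg (v |: s) w = (-1) ^+ (rk v w) * sg s w.
Proof.
move=> vs; rewrite /sg.
case: (boolP (rk v w)) => h.
  have -> : [set u in v |: s | rk u w] = v |: [set u in s | rk u w].
    by apply/setP => x; rewrite !inE; case: eqP => [->|]; rewrite ?h.
  by rewrite cardsU1 !inE (negbTE vs) /= exprD.
have -> : [set u in v |: s | rk u w] = [set u in s | rk u w].
  by apply/setP => x; rewrite !inE; case: eqP => [->|]; rewrite ?(negbTE h) ?(negbTE vs).
by rewrite /= expr0 mul1r.
Qed.

Lemma rk_anti (v w : V) : v != w -> (-1) ^+ (rk v w) = - (-1) ^+ (rk w v) :> int.
Proof.
move=> nvw; rewrite /rk; case: (ltngtP (enum_rank v) (enum_rank w)) => h //=.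
by move/val_inj/enum_rank_inj: h => e; rewrite e eqxx in nvw.
Qed.

Lemma bdry_bdry c : bdry (bdry c) = 0.
Proof.
apply/ffunP => s; rewrite ff0E bdryE.
pose g v w := if w != v then sg s v * sg (v |: s) w * c (w |: (v |: s)) else 0.
have E : \sum_(v in ~: s) sg s v * bdry c (v |: s) =
         \sum_(v in ~: s) \sum_(w in ~: s) g v w.
  apply: eq_bigr => v vs; rewrite bdryE big_distrr /=.
  rewrite [RHS](bigID (fun w => w == v)) /=.
  have -> : \sum_(i in ~: s | i == v) g v i = 0.
    by apply: big1 => w /andP[_ /eqP->]; rewrite /g eqxx.
  rewrite add0r.
  rewrite (eq_bigl (fun w => (w \in ~: s) && (w != v))); last first.
    by move=> w; rewrite !inE negb_or andbC eq_sym.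
  by apply: eq_bigr => w /andP[_ nwv]; rewrite /g nwv mulrA.
rewrite E.
have A : forall v w, v \in ~: s -> w \in ~: s -> g v w = - g w v.
  move=> v w vs ws; rewrite inE in vs; rewrite inE in ws; rewrite /g [v == w]eq_sym; case: (boolP (w != v)) => nwv; last by rewrite oppr0.
  rewrite (sgU1 _ vs) (sgU1 _ ws) setUCA (@rk_anti v w); first ring.
  by rewrite eq_sym.
set S := \sum_(v in ~: s) _.
have : S = - S.
  rewrite {1}/S exchange_big /= -sumrN; apply: eq_bigr => w ws.
  rewrite -sumrN; apply: eq_bigr => v vs; exact: A.
lia.
Qed.

Lemma disjP (A B : {set V}) : reflect (forall x, x \in A -> x \notin B) [disjoint A & B].
Proof.
rewrite disjoint_subset; apply: (iffP subsetP) => h x /h; by rewrite inE.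
Qed.

Definition down_closed K := forall s t, t \in K -> s \subset t -> s \in K.

Lemma Ind_down W C : down_closed (Ind W C).
Proof.
move=> s t; rewrite !inE => /andP[tW /forall_inP h] st.
rewrite (subset_trans st tW) /=; apply/forall_inP => E EC.
by apply: contra (h E EC) => Es; apply: subset_trans Es st.
Qed.

Lemma chain0 K i : is_chain K i 0.
Proof. by move=> s; rewrite ff0E eqxx. Qed.

Lemma chainB K i c d : is_chain K i c -> is_chain K i d -> is_chain K i (c - d).
Proof.
move=> hc hd s; rewrite ffBE.
case: (eqVneq (c s) 0) => [->|/hc //]; rewrite sub0r oppr_eq0; exact: hd.
Qed.

Lemma chainN K i c : is_chain K i c -> is_chain K i (- c).
Proof. by move=> hc; rewrite -sub0r; apply: chainB => //; apply: chain0. Qed.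

Lemma chain_supp K L i c : is_chain K i c ->
  (forall s, c s != 0 -> s \in K -> s \in L) -> is_chain L i c.
Proof. by move=> hc h s /[dup] cs /hc [sK ->]; split => //; apply: h. Qed.

Lemma bdry_chain K i c : down_closed K -> is_chain K i c -> is_chain K (i - 1) (bdry c).
Proof.
move=> dK hc s; rewrite bdryE => nz.
have [v /andP[vs cv]|h] := pickP [pred v | (v \in ~: s) && (c (v |: s) != 0)]; last first.
  move: nz; rewrite big1 ?eqxx // => v vs.
  by move: (h v) => /=; rewrite vs /= => /negbFE/eqP ->; rewrite mulr0.
have [vK ce] := hc _ cv.
split; first by apply: (dK _ _ vK); apply: subsetUr.
rewrite inE in vs; rewrite cardsU1 vs /= in ce; lia.
Qed.

Lemma bdryN c : bdry (- c) = - bdry c.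
Proof. by rewrite -sub0r bdryB bdry0 sub0r. Qed.

Section WithF.
Variable F : {set V}.

Definition nF v := #|[set u in F | rk u v]|.
Definition eps s : int := (-1) ^+ (\sum_(w in s :\: F) nF w).

Definition Psi c : chainT V :=
  [ffun t : {set V} => if [disjoint t & F] then eps (t :|: F) * c (t :|: F) else 0].
Definition Phi z : chainT V :=
  [ffun s : {set V} => if F \subset s then eps s * z (s :\: F) else 0].
Definition Rr c : chainT V := [ffun s : {set V} => if F \subset s then 0 else c s].

Lemma epsU1 s v : v \notin s -> v \notin F -> eps (v |: s) = (-1) ^+ nF v * eps s.
Proof.
move=> vs vF; rewrite /eps.
have -> : (v |: s) :\: F = v |: (s :\: F).
  by apply/setP => x; rewrite !inE; case: eqP => [->|]; rewrite ?vF.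
by rewrite big_setU1 ?exprD //= !inE negb_and vs orbT.
Qed.

Lemma sg_split t v : [disjoint t & F] -> sg (t :|: F) v = sg t v * (-1) ^+ nF v.
Proof.
move=> dt; rewrite /sg /nF -exprD.
have -> : [set u in t :|: F | rk u v] = [set u in t | rk u v] :|: [set u in F | rk u v].
  by apply/setP => x; rewrite !inE andb_orl.
rewrite -cardsUI.
have -> : [set u in t | rk u v] :&: [set u in F | rk u v] = set0.
  apply/setP => x; rewrite !inE; case: (boolP (x \in t)) => //= xt.
  by rewrite (disjointFr dt xt) andbF.
by rewrite cards0 addn0.
Qed.

Lemma Psi_bdry c : Psi (bdry c) = bdry (Psi c).
Proof.
apply/ffunP => t; rewrite !ffunE.
case: (boolP [disjoint t & F]) => dt; last first.
  rewrite big1 // => v _; rewrite ffunE.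
  case: (boolP [disjoint v |: t & F]) => [d|]; last by rewrite mulr0.
  by move: dt; rewrite (disjointWl _ d) // subsetUr.
rewrite big_distrr /= [RHS](bigID (fun v => v \in F)) /=.
rewrite [X in _ = X + _]big1 ?add0r; last first.
  move=> v /andP[_ vF]; rewrite ffunE.
  case: (boolP [disjoint v |: t & F]) => [d|]; last by rewrite mulr0.
  by move: (disjointFr d (setU11 v t)); rewrite vF.
rewrite [RHS](eq_bigl (fun v => v \in ~: (t :|: F))); last first.
  by move=> v; rewrite !inE negb_or.
apply: eq_bigr => v; rewrite !inE negb_or => /andP[vt vF]; rewrite ffunE.
have -> : [disjoint v |: t & F].
  apply/disjP => x; rewrite !inE => /orP[/eqP->//|xt]; exact/negbT/(disjointFr dt xt).
rewrite -setUA epsU1 ?inE ?negb_or ?vt //.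
rewrite -/(sg (t :|: F) v) -/(sg t v) sg_split //; ring.
Qed.
Lemma PsiB c d : Psi (c - d) = Psi c - Psi d.
Proof. by apply/ffunP => t; rewrite !ffunE; case: ifP; rewrite ?subr0 // mulrBr. Qed.
Lemma Psi0 : Psi 0 = 0.
Proof. by apply/ffunP => t; rewrite !ffunE; case: ifP; rewrite // mulr0. Qed.
Lemma PhiB c d : Phi (c - d) = Phi c - Phi d.
Proof. by apply/ffunP => t; rewrite !ffunE; case: ifP; rewrite ?subr0 // mulrBr. Qed.
Lemma Phi0 : Phi 0 = 0.
Proof. by apply/ffunP => t; rewrite !ffunE; case: ifP; rewrite // mulr0. Qed.
Lemma RrB c d : Rr (c - d) = Rr c - Rr d.
Proof. by apply/ffunP => t; rewrite !ffunE; case: ifP; rewrite ?subr0. Qed.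

Lemma eps_sq s : eps s * eps s = 1.
Proof. exact: sign_sq. Qed.

Lemma PsiPhi z : (forall t, z t != 0 -> [disjoint t & F]) -> Psi (Phi z) = z.
Proof.
move=> hz; apply/ffunP => t; rewrite !ffunE subsetUr.
case: (boolP [disjoint t & F]) => dt.
  have -> : (t :|: F) :\: F = t.
    apply/setP => x; rewrite !inE; case: (boolP (x \in F)) => xF /=; last by rewrite orbF.
    by case: (boolP (x \in t)) => // xt; move: (disjP _ _ dt x xt); rewrite xF.
  by rewrite mulrA eps_sq mul1r.
by case: (eqVneq (z t) 0) => // /hz; rewrite (negbTE dt).
Qed.

Lemma PhiPsi c : Phi (Psi c) = c - Rr c.
Proof.
apply/ffunP => s; rewrite !ffunE.
case: (boolP (F \subset s)) => Fs; last by rewrite subrr.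
have -> : [disjoint s :\: F & F] by apply/disjP => x; rewrite !inE => /andP[].
have -> : s :\: F :|: F = s by apply/setP => x; rewrite !inE; case: (boolP (x \in F)) => xF; rewrite ?orbT ?orbF /= ?(subsetP Fs x xF).
by rewrite mulrA eps_sq mul1r subr0.
Qed.


Lemma disj_UD t : [disjoint t & F] -> (t :|: F) :\: F = t.
Proof.
move=> dt; apply/setP => x; rewrite !inE; case: (boolP (x \in F)) => xF /=; last by rewrite orbF.
by case: (boolP (x \in t)) => // xt; move: (disjP _ _ dt x xt); rewrite xF.
Qed.

Lemma DU_id s : F \subset s -> s :\: F :|: F = s.
Proof.
move=> Fs; apply/setP => x; rewrite !inE; case: (boolP (x \in F)) => xF; rewrite ?orbT ?orbF //=.
by rewrite (subsetP Fs x xF).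
Qed.

Lemma card_disjU t : [disjoint t & F] -> #|t :|: F| = (#|t| + #|F|)%N.
Proof. by move=> dt; rewrite -cardsUI disjoint_setI0 // cards0 addn0. Qed.

Lemma chain_deg K i j c : is_chain K i c -> i = j -> is_chain K j c.
Proof. by move=> h <-. Qed.

Lemma Psi_chain K L i c : is_chain K i c ->
  (forall s, s \in K -> F \subset s -> s :\: F \in L) -> is_chain L (i - #|F|%:Z) (Psi c).
Proof.
move=> hc h t; rewrite ffunE; case: ifP => dt; last by rewrite eqxx.
move=> nz; have cz : c (t :|: F) != 0 by apply: contraNneq nz => ->; rewrite mulr0.
have [sK e] := hc _ cz; split.
  by rewrite -(disj_UD dt); apply: h => //; apply: subsetUr.
by rewrite card_disjU // in e; lia.
Qed.

Lemma Phi_chain L K j z : is_chain L j z ->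
  (forall t, t \in L -> [disjoint t & F] /\ t :|: F \in K) -> is_chain K (j + #|F|%:Z) (Phi z).
Proof.
move=> hz h s; rewrite ffunE; case: ifP => Fs; last by rewrite eqxx.
move=> nz; have cz : z (s :\: F) != 0 by apply: contraNneq nz => ->; rewrite mulr0.
have [tL e] := hz _ cz; have [dj tK] := h _ tL.
rewrite DU_id // in tK; split => //.
have := card_disjU dj; rewrite DU_id // => ->; lia.
Qed.

Lemma Rr_chain K (A : {set {set V}}) i c : is_chain K i c ->
  (forall s, s \in K -> ~~ (F \subset s) -> s \in A) -> is_chain A i (Rr c).
Proof.
move=> hc h s; rewrite ffunE; case: ifP => Fs; first by rewrite eqxx.
by move=> /hc [sK e]; split => //; apply: h => //; rewrite Fs.
Qed.

Lemma Psi_supp c : Psi c = 0 -> forall s, F \subset s -> c s = 0.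
Proof.
move=> h s Fs; move/ffunP: h => /(_ (s :\: F)); rewrite !ffunE.
have -> : [disjoint s :\: F & F] by apply/disjP => x; rewrite !inE => /andP[].
rewrite DU_id // => /(congr1 (fun x => eps s * x)).
by rewrite mulrA eps_sq mul1r mulr0.
Qed.

Lemma Psi_zero c : (forall s, F \subset s -> c s = 0) -> Psi c = 0.
Proof.
move=> h; apply/ffunP => t; rewrite !ffunE; case: ifP => // _.
by rewrite h ?mulr0 // subsetUr.
Qed.

Lemma key1 d : (forall t, d t != 0 -> [disjoint t & F]) ->
  bdry (Phi (bdry d)) = bdry (- Rr (bdry (Phi d))).
Proof.
move=> hd; have -> : Phi (bdry d) = Phi (Psi (bdry (Phi d))) by rewrite Psi_bdry PsiPhi.
by rewrite PhiPsi bdryB bdry_bdry sub0r bdryN.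
Qed.

End WithF.

Section Hyp.
Variables (C : {set {set V}}) (F : {set V}).
Hypothesis hC : is_hypergraph C.
Hypothesis FC : F \in C.

Lemma sub_from_D (E s : {set V}) : F \subset s -> E :\: F \subset s -> E \subset s.
Proof.
move=> Fs Es; apply/subsetP => y yE; case: (boolP (y \in F)) => yF.
  exact: (subsetP Fs).
by apply: (subsetP Es); rewrite !inE yF.
Qed.

Lemma H3 s : s \in Ind [set: V] C -> ~~ (F \subset s).
Proof. by rewrite inE => /andP[_ /forall_inP /(_ F FC)]. Qed.

Lemma H5 s : s \in Ind [set: V] C -> s \in Ind [set: V] (hdel C F).
Proof.
rewrite !inE => /andP[-> /forall_inP h]; apply/forall_inP => E.
by rewrite !inE => /andP[_ /h].
Qed.

Lemma H4 s : s \in Ind [set: V] (hdel C F) -> ~~ (F \subset s) -> s \in Ind [set: V] C.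
Proof.
rewrite !inE => /andP[-> /forall_inP h] nFs; apply/forall_inP => E EC.
case: (eqVneq E F) => [->//|nEF]; apply: h; by rewrite !inE nEF.
Qed.

Lemma H2 s : s \in Ind [set: V] (hdel C F) -> F \subset s ->
  s :\: F \in Ind (hcolon_vertices C F) (hcolon C F).
Proof.
rewrite inE => /andP[_ /forall_inP h] Fs; rewrite inE; apply/andP; split.
  apply/subsetP => x; rewrite !inE => /andP[xF xs]; rewrite negb_or xF /=.
  apply/negP => /bigcupP [E /andP[EC /cards1P [a Ea]] xE].
  have xa : x = a by move: xE; rewrite Ea inE => /eqP.
  suff : E \subset s.
    apply/negP; apply: h; rewrite !inE EC andbT; apply/negP => /eqP EF.
    by move: xE; rewrite EF setDv inE.
  apply: sub_from_D Fs _; rewrite Ea; apply/subsetP => y; rewrite inE => /eqP ->.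
  by rewrite -xa.
apply/forall_inP => D; rewrite /hcolon inE => /andP[/imsetP [E EC ->] _].
apply/negP => ED; have : E \subset s.
  by apply: sub_from_D Fs _; apply: subset_trans ED _; apply: subsetDl.
by apply/negP; apply: h.
Qed.

Lemma H1 t : t \in Ind (hcolon_vertices C F) (hcolon C F) ->
  [disjoint t & F] /\ t :|: F \in Ind [set: V] (hdel C F).
Proof.
rewrite inE => /andP[tW /forall_inP ht].
have tF : forall x, x \in t -> x \notin F /\ x \notin hnbhd C F.
  by move=> x /(subsetP tW); rewrite !inE negb_or => /andP[-> ->].
split; first by apply/disjP => x /tF [].
rewrite inE subsetT /=; apply/forall_inP => E EC; apply/negP => Es.
have main : forall n D, D \in [set E0 :\: F | E0 in hdel C F] -> (#|D| < n)%N -> D \subset t -> False.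
  elim=> [//|n IH] D DF Dn Dt.
  have [E' E'C DE] := imsetP DF.
  move: E'C; rewrite !inE => /andP[nE'F E'C].
  have [D0|Dn0] := eqVneq #|D| 0%N.
    move: D0 => /eqP; rewrite cards_eq0 DE => /eqP E0.
    have E'F : E' \subset F.
      apply/subsetP => y yE; apply/negPn/negP => yF.
      have : y \in E' :\: F by rewrite !inE yF yE.
      by rewrite E0 inE.
    by move: nE'F; rewrite (hC.2 _ _ E'C FC E'F) eqxx.
  have [D1|Dn1] := eqVneq #|D| 1%N.
    move: D1 => /eqP/cards1P [x Dx].
    have xt : x \in t by apply: (subsetP Dt); rewrite Dx set11.
    have [_] := tF x xt; apply/negP/negPn/bigcupP; exists E'.
      by rewrite E'C /= -DE Dx cards1.
    by rewrite -DE Dx set11.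
  have D2 : (2 <= #|D|)%N by lia.
  case: (boolP [forall D' in [set E0 :\: F | E0 in hdel C F], (D' \subset D) ==> (D' == D)]) => hm.
    by move: (ht D); rewrite /hcolon inE DF D2 hm Dt => /(_ isT).
  move/forall_inPn: hm => [D' D'F]; rewrite negb_imply => /andP[D'D nD'D].
  apply: (IH D' D'F); last exact: subset_trans D'D Dt.
  have : (#|D'| < #|D|)%N by apply: proper_card; rewrite properEneq nD'D D'D.
  lia.
apply: (main #|E :\: F|.+1 (E :\: F)) => //.
  by apply: imset_f.
apply/subsetP => x; rewrite !inE => /andP[xF xE].
by move: (subsetP Es x xE); rewrite !inE (negbTE xF) orbF.
Qed.

End Hyp.
End Gen.

Unset Implicit Arguments.
Set Strict Implicit.

Theorem theorem3p1 (V : finType) (C : {set {set V}}) (F : {set V}) :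
  is_hypergraph C -> F \in C ->
  let IC := Ind [set: V] C in
  let ICF := Ind [set: V] (hdel C F) in
  let ICol := Ind (hcolon_vertices C F) (hcolon C F) in
  let k := (#|F|)%:Z in
  exists alpha beta gamma : int -> chainT V -> chainT V,
    forall i : int,
      [/\ hmap ICol (i - k + 1) IC i (alpha i),
          hmap IC i ICF i (beta i) &
          hmap ICF i ICol (i - k) (gamma i)] /\
      [/\ exact_at ICol (i - k + 1) (alpha i) IC i (beta i) ICF i,
          exact_at IC i (beta i) ICF i (gamma i) ICol (i - k) &
          exact_at ICF i (gamma i) ICol (i - k) (alpha (i - 1)) IC (i - 1)].
Proof.
move=> hC FC IC ICF ICol k.
have dIC : down_closed IC by apply: Ind_down.
have dICF : down_closed ICF by apply: Ind_down.
have dICol : down_closed ICol by apply: Ind_down.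
have hL : forall t, t \in ICol -> [disjoint t & F] /\ t :|: F \in ICF := @H1 _ C F hC FC.
have hQ : forall s, s \in ICF -> F \subset s -> s :\: F \in ICol := @H2 _ C F.
have hA : forall s, s \in ICF -> ~~ (F \subset s) -> s \in IC := @H4 _ C F.
have hAK : forall s, s \in IC -> s \in ICF := @H5 _ C F.
have hAF : forall s, s \in IC -> ~~ (F \subset s) := @H3 _ C F FC.
have Ldisj : forall j z, is_chain ICol j z -> forall t, z t != 0 -> [disjoint t & F].
  by move=> j z hz t /hz [tL _]; case: (hL t tL).
have AK : forall j c, is_chain IC j c -> is_chain ICF j c.
  move=> j c hc; apply: chain_supp hc _ => s _; exact: hAK.
have APsi : forall j c, is_chain IC j c -> Psi F c = 0.
  move=> j c hc; apply: Psi_zero => s Fs; apply/eqP; apply/negPn/negP => /hc [sA _].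
  by move: (hAF _ sA); rewrite Fs.
have KA : forall j c, is_chain ICF j c -> Psi F c = 0 -> is_chain IC j c.
  move=> j c hc hP; apply: chain_supp hc _ => s nz sK; apply: hA => //; apply/negP => Fs.
  by move: nz; rewrite (Psi_supp hP Fs) eqxx.
have PsiC : forall j m c, is_chain ICF j c -> j - k = m -> is_chain ICol m (Psi F c).
  move=> j m c hc <-; exact: Psi_chain hc hQ.
have PhiC : forall j m z, is_chain ICol j z -> j + k = m -> is_chain ICF m (Phi F z).
  move=> j m z hz <-; exact: Phi_chain hz hL.
have RrC : forall j c, is_chain ICF j c -> is_chain IC j (Rr F c).
  move=> j c hc; exact: Rr_chain hc hA.
have bC : forall (K : {set {set V}}) (j m : int) (c : chainT V), down_closed K -> is_chain K j c -> j - 1 = m -> is_chain K m (bdry c).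
  move=> K j m c dK hc <-; exact: bdry_chain dK hc.
exists (fun _ z => bdry (Phi F z)), (fun _ z => z), (fun _ z => Psi F z) => i.
split; split.
- split.
  + by move=> x y; rewrite PhiB bdryB.
  + move=> z [hz zb]; split; last by rewrite bdry_bdry.
    apply: KA; first by apply: (bC _ (i + 1)) => //; [apply: (PhiC _ _ _ hz) | ]; lia.
    rewrite Psi_bdry PsiPhi; [by rewrite zb | exact: Ldisj hz].
  + move=> b [d [hd ->]]; exists (- Rr F (bdry (Phi F d))); split; last first.
      by rewrite key1 //; exact: Ldisj hd.
    apply: chainN; apply: RrC; apply: (bC _ (i + 2)) => //; [apply: (PhiC _ _ _ hd) | ]; lia.
- split => //.
  + move=> z [hz zb]; split => //; exact: AK hz.
  + move=> b [d [hd ->]]; exists d; split => //; exact: AK hd.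
- split.
  + by move=> x y; rewrite PsiB.
  + move=> z [hz zb]; split; first exact: (PsiC _ _ _ hz).
    by rewrite -Psi_bdry zb Psi0.
  + move=> b [d [hd ->]]; exists (Psi F d); split; last by rewrite Psi_bdry.
    apply: (PsiC _ _ _ hd); lia.
- move=> z [hz zb] /=; split.
  + move=> [d [hd ezd]]; exists (Psi F d); split.
      split; first by apply: (PsiC _ _ _ hd); lia.
      by rewrite -Psi_bdry -ezd; exact: APsi hz.
    exists (- Rr F d); split; first by apply: chainN; apply: RrC.
    by rewrite PhiPsi bdryB ezd bdryN addrAC subrr sub0r.
  + move=> [x [[hx xb] [e [he ee]]]]; exists (Phi F x - e); split.
      apply: chainB; last exact: AK he.
      by apply: (PhiC _ _ _ hx); lia.
    by rewrite bdryB -ee opprB addrC subrK.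
- move=> z [hz zb] /=; split.
  + move=> [d [hd ed]]; exists (z - bdry (Phi F d)); split.
      split; last by rewrite bdryB zb bdry_bdry subrr.
      apply: KA.
        apply: chainB => //; apply: (bC _ (i + 1)) => //; [apply: (PhiC _ _ _ hd) | ]; lia.
      rewrite PsiB Psi_bdry PsiPhi; [by rewrite ed subrr | exact: Ldisj hd].
    exists (- Phi F d); split; first by apply: chainN; apply: (PhiC _ _ _ hd); lia.
    by rewrite bdryN addrAC subrr sub0r.
  + move=> [x [[hx xb] [e [he ee]]]]; exists (- Psi F e); split.
      by apply: chainN; apply: (PsiC _ _ _ he); lia.
    by rewrite bdryN -Psi_bdry -ee PsiB (APsi _ _ hx) sub0r opprK.
- move=> z [hz zb] /=; split.
  + move=> [e [he ee]]; exists (Phi F z - e); split.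
      split; last by rewrite bdryB ee subrr.
      apply: chainB; first by apply: (PhiC _ _ _ hz); lia.
      by apply: AK; apply: chain_deg he _; lia.
    exists 0; split; first exact: chain0.
    rewrite PsiB PsiPhi; last exact: Ldisj hz.
    by rewrite (APsi _ _ he) subr0 subrr bdry0.
  + move=> [x [[hx xb] [d [hd ed]]]].
    exists (- Rr F x - - Rr F (bdry (Phi F d))); split.
      apply: chainB; apply: chainN; apply: RrC.
        by apply: chain_deg hx _; lia.
      by apply: (bC _ (i + 1)) => //; [apply: (PhiC _ _ _ hd) | ]; lia.
    have ze : z = Psi F x - bdry d by rewrite -ed opprB addrC subrK.
    rewrite ze PhiB PhiPsi !bdryB key1; last exact: Ldisj hd.
    by rewrite xb sub0r [bdry (- Rr F x)]bdryN.
Qed.
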